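(* Let $T_1$ and $T_2$ be two rooted binary trees, each with $n$ leaves labelled by the same set of $n$ distinct labels. Let $u_1,u_2,\dots,u_k$ be a root-to-leaf path of $\mathit{MCD}(T_1)$. Then $\sum_{i=1}^{k}|T_2(u_i)|=\mathrm{O}(n)$.
   Context: A rooted binary tree is one in which every internal node has exactly two children, a left and a right child. $|T|$ denotes the number of nodes of a tree $T$. A component of $T_1$ is a connected set of its nodes. An edge of $T_1$ crosses the boundary of $C$ if exactly one of its endpoints lies in $C$. It is an edge from below if its endpoint in $C$ is the parent endpoint. A centroid of a component $C$ is a node $u\in C$ such that every connected component of $C\setminus\{u\}$ has at most $|C|/2$ nodes. Removing a node $s$ from $C$ leaves at most three connected components: $C_l$ containing the left child of $s$, $C_r$ containing the right child of $s$, and $C_p$ containing the parent of $s$, each intersected with $C$ and possibly empty. The modified centroid decomposition $\mathit{MCD}(T_1)$ is a ternary tree built recursively, starting from the component $C=T_1$. For the current component $C$ a splitting node $s$ is chosen. If $C$ has no edge from below, $s$ is a centroid $c$ of $C$. Otherwise $C$ has exactly one edge $(x,y)$ from below with $x\in C$; let $c$ be a centroid of $C$, and let $s$ be the lowest common ancestor of $x$ and $c$. The node $u$ of $\mathit{MCD}(T_1)$ corresponding to $C$ stores $s$, and we write $C_u=C$. The children of $u$ are the nodes corresponding to the nonempty components among $C_l,C_r,C_p$ obtained by removing $s$ from $C$. For a node $u$ of $\mathit{MCD}(T_1)$, let $\Lambda=L(C_u)$ be the set of labels of the leaves of $T_1$ lying in $C_u$. Then $T_2(u)$ is the contraction of $T_2$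 with respect to $\Lambda$, obtained in three steps: 1. prune all leaves of $T_2$ whose labels are not in $\Lambda$; 2. repeatedly prune internal nodes that have no children; 3. repeatedly contract internal nodes that have exactly one child. The result is a binary tree with leaf set $\Lambda$. *)

(* Defs.v *)
From HB Require Import structures.
From mathcomp Require Import all_boot.
From mathcomp Require Import boolp.

Set Implicit Arguments.
Unset Strict Implicit.
Unset Printing Implicit Defensive.

Inductive tree := Leaf of nat | Node of tree & tree.

Fixpoint leaves (t : tree) : seq nat :=
  match t with Leaf a => [:: a] | Node l r => leaves l ++ leaves r end.

(** Nodes are addressed by their root-to-node path: false = left, true = right. *)
Fixpoint nodes (t : tree) : seq (seq bool) :=
  match t with
  | Leaf _ => [:: [::]]
  | Node l r => [::] :: map (cons false) (nodes l) ++ map (cons true) (nodes r)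
  end.

Definition tsize (t : tree) : nat := size (nodes t).

Fixpoint subtree (t : tree) (p : seq bool) : option tree :=
  match p, t with
  | [::], _ => Some t
  | b :: q, Node l r => subtree (if b then r else l) q
  | _ :: _, Leaf _ => None
  end.

Definition label_at (t : tree) (p : seq bool) : option nat :=
  if subtree t p is Some (Leaf a) then Some a else None.

Definition lchild (p : seq bool) := rcons p false.
Definition rchild (p : seq bool) := rcons p true.
Definition parent (p : seq bool) := take (size p).-1 p.

Definition adj : rel (seq bool) := fun x y =>
  [|| y == lchild x, y == rchild x, x == lchild y | x == rchild y].

Fixpoint lca (x y : seq bool) : seq bool :=
  match x, y with
  | a :: x', b :: y' => if a == b then a :: lca x' y' else [::]
  | _, _ => [::]
  end.

(** Sets of nodes of T1 are boolean predicates on addresses; their cardinality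
    counts the nodes of t satisfying them. *)
Definition card (t : tree) (C : pred (seq bool)) : nat := count C (nodes t).

Definition reach (S : pred (seq bool)) (x y : seq bool) : Prop :=
  exists p : seq (seq bool), [/\ path adj x p, last x p = y & all S (x :: p)].

(** the connected component of S containing x (empty if x \notin S) *)
Definition comp (S : pred (seq bool)) (x : seq bool) : pred (seq bool) :=
  fun y => `[< reach S x y >].

Definition setD1p (C : pred (seq bool)) (u : seq bool) : pred (seq bool) :=
  [pred y | (y != u) && C y].

Definition centroid (t : tree) (C : pred (seq bool)) (u : seq bool) : Prop :=
  C u /\ u \in nodes t /\
  forall x, setD1p C u x -> 2 * card t (comp (setD1p C u) x) <= card t C.

Definition edge_below (t : tree) (C : pred (seq bool)) (x y : seq bool) : Prop :=
  [/\ x \in nodes t, y \in nodes t, (y = lchild x \/ y = rchild x), C x & ~~ C y].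

Definition splitting_node (t : tree) (C : pred (seq bool)) (s : seq bool) : Prop :=
  exists c, centroid t C c /\
    ((~ (exists x y, edge_below t C x y)) /\ s = c
     \/ exists x y, edge_below t C x y /\ s = lca x c).

Definition C_l (C : pred (seq bool)) (s : seq bool) := comp (setD1p C s) (lchild s).
Definition C_r (C : pred (seq bool)) (s : seq bool) := comp (setD1p C s) (rchild s).
Definition C_p (C : pred (seq bool)) (s : seq bool) : pred (seq bool) :=
  if s is [::] then pred0 else comp (setD1p C s) (parent s).

Definition nonempty (t : tree) (C : pred (seq bool)) : bool := has C (nodes t).

(** C' is the component of a child of the MCD node with component C. *)
Definition mcd_step (t : tree) (C C' : pred (seq bool)) : Prop :=
  exists s, splitting_node t C s /\
    (C' = C_l C s \/ C' = C_r C s \/ C' = C_p C s) /\ nonempty t C'.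

Definition mcd_leaf (t : tree) (C : pred (seq bool)) : Prop :=
  exists s, splitting_node t C s /\
    [/\ ~~ nonempty t (C_l C s), ~~ nonempty t (C_r C s) & ~~ nonempty t (C_p C s)].

Fixpoint chainP (T : Type) (r : T -> T -> Prop) (x : T) (s : seq T) : Prop :=
  match s with [::] => True | y :: s' => r x y /\ chainP r y s' end.

(** Cs = [:: C_{u_1}; ...; C_{u_k}] is the list of components along a
    root-to-leaf path u_1, ..., u_k of MCD(t). *)
Definition mcd_root_leaf_path (t : tree) (Cs : seq (pred (seq bool))) : Prop :=
  exists C0 rest, [/\ Cs = C0 :: rest, C0 =1 (fun p => p \in nodes t),
                      chainP (mcd_step t) C0 rest & mcd_leaf t (last C0 rest)].

Definition leaf_labels (t : tree) (C : pred (seq bool)) : pred nat :=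
  fun a => has (fun p => C p && (label_at t p == Some a)) (nodes t).

Fixpoint contract (L : pred nat) (t : tree) : option tree :=
  match t with
  | Leaf a => if L a then Some (Leaf a) else None
  | Node l r =>
      match contract L l, contract L r with
      | Some l', Some r' => Some (Node l' r')
      | Some l', None => Some l'
      | None, Some r' => Some r'
      | None, None => None
      end
  end.

Definition osize (o : option tree) : nat := if o is Some t then tsize t else 0.

(** |T2(u)| for the MCD node u with component C of T1. *)
Definition T2_size (t1 t2 : tree) (C : pred (seq bool)) : nat :=
  osize (contract (leaf_labels t1 C) t2).

(* Main.v *)
Require Import Defs.
From mathcomp Require Import all_boot.
From mathcomp Require Import zify boolp.
Import Defs.
Set Implicit Arguments. Unset Strict Implicit. Unset Printing Implicit Defensive.

Lemma prefix_rconsr (p v : seq bool) b : prefix p v -> prefix p (rcons v b).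
Proof. move=> h; exact: prefix_trans h (prefix_rcons _ _). Qed.

Lemma prefix_rcons_inv (p v : seq bool) b :
  prefix p (rcons v b) -> prefix p v \/ p = rcons v b.
Proof.
elim: v p => [|a v IH] [|x p] /=; try by left.
- by case/andP=> /eqP -> ; case: p => // _; right.
- case/andP=> /eqP -> /IH [h|->]; [left; rewrite /= eqxx h // | by right].
Qed.

Lemma lca_prefixl x y : prefix (lca x y) x.
Proof.
elim: x y => [|a x IH] [|b y] //=; case: ifP => // _; rewrite eqxx; exact: IH.
Qed.

Lemma lca_prefixr x y : prefix (lca x y) y.
Proof.
elim: x y => [|a x IH] [|b y] //=; case: ifP => // /eqP ->; rewrite eqxx; exact: IH.
Qed.

Lemma lca_prefix p x y : prefix p x -> prefix p y -> prefix p (lca x y).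
Proof.
elim: x y p => [|a x IH] [|b y] [|c p] //=; first by rewrite prefix0s.
move=> /andP[/eqP <- h1] /andP[/eqP <- h2]; rewrite eqxx /= eqxx; exact: IH.
Qed.

Lemma prefix_next (s c : seq bool) : prefix s c -> s <> c -> exists b, prefix (rcons s b) c.
Proof.
case/prefixP=> [[|b w] ->]; first by rewrite cats0.
move=> _; exists b; rewrite -cat_rcons; apply: prefix_prefix.
Qed.

Lemma prefix_rcons_uniq (s c : seq bool) b b' :
  prefix (rcons s b) c -> prefix (rcons s b') c -> b = b'.
Proof.
rewrite !prefixE !size_rcons => /eqP -> /eqP /rcons_inj [] //.
Qed.

Lemma adj_cases u v : adj u v -> (exists b, v = rcons u b) \/ (exists b, u = rcons v b).
Proof.
rewrite /adj /lchild /rchild.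
by case/or4P=> /eqP ->; [left; exists false|left; exists true|right; exists false|right; exists true].
Qed.

Lemma reach_inv (S P : pred (seq bool)) x y : reach S x y -> P x ->
  (forall u v, P u -> S v -> adj u v -> P v) -> reach (fun u => S u && P u) x y.
Proof.
case=> p [hp hl ha] Px cl; elim: p x hp hl ha Px => [|z p IH] x /=.
  move=> _ <- /andP[Sx _] Px; exists [::]; split => //=; by rewrite Sx Px.
case/andP=> axz hp hl /and3P[Sx Sz ha] Px.
have Pz : P z by apply: cl axz.
case: (IH z hp hl); first by rewrite /= Sz.
  done.
move=> q [hq hlq haq]; exists (z :: q); split => //=.
  by rewrite axz.
by rewrite /= Sx Px; move: haq => /=.
Qed.

Lemma reach_mono (S S' : pred (seq bool)) x y : reach S x y ->
  (forall u, S u -> S' u) -> reach S' x y.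
Proof. case=> p [hp hl ha] h; exists p; split => //; exact: sub_all ha. Qed.

Lemma reach_end (S : pred (seq bool)) x y : reach S x y -> S x /\ S y.
Proof.
case=> p [_ <- ha]; move: ha; rewrite /= => /andP[Sx ha]; split => //.
elim: p x Sx ha => //= z p IH x _ /andP[Sz ha]; exact: IH.
Qed.

Lemma reach_ext (S : pred (seq bool)) x y z : reach S x y -> S z -> adj y z -> reach S x z.
Proof.
case=> p [hp hl ha] Sz ayz; exists (rcons p z); split.
- by rewrite rcons_path hp hl ayz.
- by rewrite last_rcons.
- by rewrite -rcons_cons all_rcons Sz ha.
Qed.

Lemma compP (S : pred (seq bool)) z y : reflect (reach S z y) (comp S z y).
Proof. exact: asboolP. Qed.

Lemma comp_restrict (S S' P : pred (seq bool)) z y : comp S z y -> P z ->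
  (forall u v, P u -> S v -> adj u v -> P v) ->
  (forall u, S u -> P u -> S' u) -> comp S' z y.
Proof.
move/compP=> h Pz cl sub; apply/compP; apply: reach_mono (reach_inv h Pz cl) _.
by move=> u /andP[]; apply: sub.
Qed.

Lemma comp_P (S P : pred (seq bool)) z y : comp S z y -> P z ->
  (forall u v, P u -> S v -> adj u v -> P v) -> S y && P y.
Proof.
move/compP=> h Pz cl; exact: (reach_end (reach_inv h Pz cl)).2.
Qed.

Lemma comp_sub (C : pred (seq bool)) s z y : comp (setD1p C s) z y -> C y.
Proof. by move/compP/reach_end=> [_ /andP[]]. Qed.

Lemma comp_start (S : pred (seq bool)) z y : comp S z y -> S z.
Proof. by move/compP/reach_end=> []. Qed.

Lemma card_subp t (D D' : pred (seq bool)) : (forall y, D y -> D' y) -> card t D <= card t D'.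
Proof. move=> h; exact: sub_count. Qed.

Lemma card_pred0 t (D : pred (seq bool)) : (forall y, ~~ D y) -> card t D = 0.
Proof. move=> h; rewrite /card (eq_count (a2 := pred0)) ?count_pred0 // => y; exact/negbTE. Qed.

Lemma edge_adj x y : (y = lchild x \/ y = rchild x) -> adj x y.
Proof. by case=> ->; rewrite /adj eqxx ?orbT. Qed.

Lemma comp_edge t (C : pred (seq bool)) s z x' y' :
  edge_below t (comp (setD1p C s) z) x' y' -> edge_below t C x' y' \/ y' = s.
Proof.
case=> hx hy hc Dx nDy.
have Sy : ~~ setD1p C s y'.
  apply/negP=> Sy; move/negP: nDy; apply; apply/compP.
  apply: reach_ext (Sy) (edge_adj hc); exact/compP.
move: Sy; rewrite /setD1p /= negb_and negbK => /orP[/eqP ->|nC]; first by right.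
left; split => //; exact: comp_sub Dx.
Qed.

Lemma clos_b (C : pred (seq bool)) s b u v : prefix (rcons s b) u -> setD1p C s v -> adj u v ->
  prefix (rcons s b) v.
Proof.
move=> pu /andP[vs _] /adj_cases [[b' ->]|[b' eu]]; first exact: prefix_rconsr.
move: pu; rewrite eu => /prefix_rcons_inv [//|/rcons_inj [e _]].
by rewrite e eqxx in vs.
Qed.

Lemma clos_p (C : pred (seq bool)) s u v : ~~ prefix s u -> setD1p C s v -> adj u v ->
  ~~ prefix s v.
Proof.
move=> pu /andP[vs _] /adj_cases [[b' ev]|[b' eu]].
  apply/negP; rewrite ev => /prefix_rcons_inv [h|e]; first by rewrite h in pu.
  by rewrite ev -e eqxx in vs.
apply: contra pu; rewrite eu; exact: prefix_rconsr.
Qed.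

Lemma parent_rcons (s : seq bool) a : parent (rcons s a) = s.
Proof. by rewrite /parent size_rcons /= -cats1 take_size_cat. Qed.

Lemma no_prefix_parent (s : seq bool) : s != [::] -> ~~ prefix s (parent s).
Proof.
case/lastP: s => // s a _; rewrite parent_rcons; apply/negP => /size_prefix.
by rewrite size_rcons ltnn.
Qed.

Lemma Cb_prefix (C : pred (seq bool)) s b y :
  comp (setD1p C s) (rcons s b) y -> prefix (rcons s b) y.
Proof.
move=> h; case/andP: (comp_P (P := prefix (rcons s b)) h (prefix_refl _) (@clos_b C s b)) => //.
Qed.

Lemma Cp_noprefix (C : pred (seq bool)) s y : s != [::] ->
  comp (setD1p C s) (parent s) y -> ~~ prefix s y.
Proof.
move=> ns h; case/andP: (comp_P (P := fun u => ~~ prefix s u) h (no_prefix_parent ns) (@clos_p C s)) => //.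
Qed.

Lemma Cb_edge t (C : pred (seq bool)) s b x' y' :
  edge_below t (comp (setD1p C s) (rcons s b)) x' y' ->
  edge_below t C x' y' /\ prefix (rcons s b) x'.
Proof.
move=> e; have px : prefix (rcons s b) x' by case: e => _ _ _ Dx _; exact: Cb_prefix Dx.
case: (comp_edge e) => // ey; case: e => _ _ hc _ _; exfalso.
move: px => /size_prefix; rewrite size_rcons.
by case: hc; rewrite -ey /lchild /rchild => ->; rewrite !size_rcons; lia.
Qed.

Lemma Cp_edge t (C : pred (seq bool)) s x' y' : s != [::] ->
  edge_below t (comp (setD1p C s) (parent s)) x' y' ->
  (edge_below t C x' y' /\ ~~ prefix s x') \/ x' = parent s.
Proof.
move=> ns e; case: (comp_edge e) => [e'|ey].
  left; split => //; case: e => _ _ _ Dx _; exact: Cp_noprefix Dx.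
right; case: e => _ _ hc _ _; case: hc; rewrite -ey /lchild /rchild => ->;
by rewrite parent_rcons.
Qed.

Definition inv1 t (C : pred (seq bool)) :=
  forall x y x' y', edge_below t C x y -> edge_below t C x' y' -> x = x'.
Definition noedge t (C : pred (seq bool)) := forall x y, ~ edge_below t C x y.
Definition child (C C' : pred (seq bool)) s :=
  C' = C_l C s \/ C' = C_r C s \/ C' = C_p C s.

Lemma child_sub C C' s y : child C C' s -> C' y -> C y.
Proof.
case=> [->|[->|->]]; try exact: comp_sub.
by case: s => //= a s; apply: comp_sub.
Qed.

Lemma centroid_bound t C c z : centroid t C c -> 2 * card t (comp (setD1p C c) z) <= card t C.
Proof.
case=> _ [_ h]; have [Sz|nSz] := boolP (setD1p C c z); first exact: h.
rewrite card_pred0 // => y; apply/negP => /comp_start; exact/negP.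
Qed.

Lemma halve_centroid t C C' c : centroid t C c -> child C C' c -> 2 * card t C' <= card t C.
Proof.
move=> hc [->|[->|->]]; try exact: centroid_bound.
case: c hc => [|a c] hc /=; last exact: centroid_bound.
by rewrite card_pred0.
Qed.

Lemma child_inv t C C' s : (forall x y, edge_below t C x y -> prefix s x) -> inv1 t C ->
  child C C' s -> inv1 t C'.
Proof.
move=> hp hi [->|[->|->]].
- move=> x y x' y' /Cb_edge [e1 _] /Cb_edge [e2 _]; exact: hi e1 e2.
- move=> x y x' y' /Cb_edge [e1 _] /Cb_edge [e2 _]; exact: hi e1 e2.
case: s hp => [|a s] hp /=.
  by move=> x y x' y' [].
have ns : (a :: s) != [::] by [].
have H : forall x y, edge_below t (comp (setD1p C (a :: s)) (parent (a :: s))) x y -> x = parent (a :: s).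
  move=> x y /(Cp_edge ns) [[e np]|//]; by rewrite (hp _ _ e) in np.
by move=> x y x' y' /H -> /H ->.
Qed.

Lemma Cp_eq (C : pred (seq bool)) s : s != [::] -> C_p C s = comp (setD1p C s) (parent s).
Proof. by case: s. Qed.

Lemma halve_lca t C C' c s x0 y0 : centroid t C c -> inv1 t C -> edge_below t C x0 y0 ->
  s = lca x0 c -> child C C' s -> 2 * card t C' <= card t C \/ noedge t C'.
Proof.
move=> hc hi e0 es hch.
have [sc|nsc] := eqVneq s c; first by left; apply: halve_centroid hc _; rewrite -sc.
have psc : prefix s c by rewrite es; apply: lca_prefixr.
have neq : s <> c by apply/eqP.
have [b pb] := prefix_next psc neq.
have npx : ~~ prefix (rcons s b) x0.
  apply/negP => px; have := lca_prefix px pb; rewrite -es => /size_prefix.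
  rewrite size_rcons; lia.
have Hb : forall b0, 2 * card t (comp (setD1p C s) (rcons s b0)) <= card t C \/
    noedge t (comp (setD1p C s) (rcons s b0)).
  move=> b0; have [eb|nb] := eqVneq b0 b.
  - right; move=> x y /Cb_edge [e1 p1]; rewrite eb in p1.
    have ex := hi _ _ _ _ e1 e0; rewrite ex in p1; by rewrite p1 in npx.
  - left; apply: leq_trans (centroid_bound (rcons s b0) hc); rewrite leq_mul2l; apply/orP; right.
    apply: card_subp => y hy.
    apply: (comp_restrict (P := prefix (rcons s b0)) hy (prefix_refl _) (@clos_b C s b0)).
    move=> u /andP[us Cu] pu; rewrite /setD1p /= Cu andbT; apply/eqP => euc; rewrite euc in pu.
    by move: nb; rewrite (prefix_rcons_uniq pu pb) eqxx.
case: hch => [->|[->|->]]; [exact: Hb false | exact: Hb true |].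
have [s0|ns] := eqVneq s [::]; first by left; rewrite s0 card_pred0.
left; rewrite (Cp_eq C ns); apply: leq_trans (centroid_bound (parent s) hc).
rewrite leq_mul2l; apply/orP; right; apply: card_subp => y hy.
apply: (comp_restrict (P := fun u => ~~ prefix s u) hy (no_prefix_parent ns) (@clos_p C s)).
move=> u /andP[us Cu] pu; rewrite /setD1p /= Cu andbT; apply/eqP => euc.
by rewrite euc psc in pu.
Qed.

Lemma step_props t C C' : inv1 t C -> mcd_step t C C' ->
  inv1 t C' /\ card t C' <= card t C /\ (2 * card t C' <= card t C \/ noedge t C').
Proof.
move=> hi [s [[c [hc hs]] [hch _]]].
have hle : card t C' <= card t C by apply: card_subp => y; apply: child_sub hch.
case: hs => [[ne sc]|[x [y [e es]]]].
  subst s; split; last by split => //; left; apply: halve_centroid hc hch.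
  apply: child_inv hch => // x y e; exfalso; apply: ne; by exists x, y.
split; last by split => //; apply: halve_lca hc hi e es hch.
apply: child_inv hch => // x' y' e'; rewrite (hi _ _ _ _ e' e) es; exact: lca_prefixl.
Qed.

Lemma step_noedge t C C' : noedge t C -> mcd_step t C C' -> 2 * card t C' <= card t C.
Proof.
move=> hn [s [[c [hc hs]] [hch _]]].
case: hs => [[ne sc]|[x [y [e es]]]]; last by case: (hn _ _ e).
subst s; exact: halve_centroid hc hch.
Qed.

Lemma chain_sum t n : forall C rest, size rest <= n -> inv1 t C ->
  chainP (mcd_step t) C rest -> \sum_(D <- C :: rest) card t D <= 4 * card t C.
Proof.
elim: n => [|n IH] C [|C1 rest] //=; rewrite ?big_cons ?big_nil; try lia.
move=> hs hi [st hc].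
have [hi1 [hle [hh|hn]]] := step_props hi st.
  have := IH C1 rest hs hi1 hc; rewrite big_cons; lia.
case: rest hs hc => [|C2 rest2] hs hc; first by rewrite ?big_nil in hle *; lia.
case: hc => st2 hc2 /=.
have h2 := step_noedge hn st2.
have [hi2 _] := step_props hi1 st2.
have := IH C2 rest2 (leq_trans (leqnSn _) hs) hi2 hc2.
rewrite ?big_cons; lia.
Qed.

Lemma tsize_node l r : tsize (Node l r) = (tsize l + tsize r).+1.
Proof. by rewrite /tsize /= size_cat !size_map. Qed.

Lemma tsize_leaves t : tsize t < 2 * size (leaves t).
Proof.
elim: t => [a|l IHl r IHr] //; rewrite tsize_node /= size_cat; lia.
Qed.

Lemma contract_bound (L : pred nat) t :
  match contract L t with Some t' => tsize t' < 2 * count L (leaves t) | None => true end.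
Proof.
elim: t => [a|l IHl r IHr] /=; first by case: ifP => //= ->.
rewrite count_cat.
case: (contract L l) IHl => [l'|] IHl; case: (contract L r) IHr => [r'|] IHr //=;
  rewrite ?tsize_node; lia.
Qed.

Lemma osize_bound (L : pred nat) t : osize (contract L t) <= 2 * count L (leaves t).
Proof. have := contract_bound L t; case: (contract L t) => //= t' h; lia. Qed.

Lemma T2_bound t1 t2 C : uniq (leaves t1) -> perm_eq (leaves t1) (leaves t2) ->
  T2_size t1 t2 C <= 2 * card t1 C.
Proof.
move=> hu hp; rewrite /T2_size; apply: leq_trans (osize_bound _ _) _.
rewrite leq_mul2l; apply/orP; right.
have -> : count (leaf_labels t1 C) (leaves t2) = count (leaf_labels t1 C) (leaves t1).
  by move/permP: hp => ->.
rewrite -size_filter.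
apply: leq_trans (_ : size (pmap (label_at t1) (filter C (nodes t1))) <= _).
  apply: uniq_leq_size; first exact: filter_uniq.
  move=> a; rewrite mem_filter => /andP[/hasP [p pn /andP[Cp /eqP lp]] _].
  rewrite mem_pmap -lp; apply: map_f; by rewrite mem_filter Cp pn.
rewrite size_pmap; apply: (leq_trans (count_size _ _)); by rewrite size_filter.
Qed.

Lemma sum_le2 (Cs : seq (pred (seq bool))) (f g : pred (seq bool) -> nat) :
  (forall C, f C <= 2 * g C) -> \sum_(C <- Cs) f C <= 2 * \sum_(C <- Cs) g C.
Proof.
move=> h; elim: Cs => [|C Cs IH]; rewrite ?big_nil ?big_cons //.
have := h C; lia.
Qed.

Theorem lemma3 :
  exists K : nat, forall (n : nat) (t1 t2 : tree) (Cs : seq (pred (seq bool))),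
    uniq (leaves t1) -> perm_eq (leaves t1) (leaves t2) -> size (leaves t1) = n ->
    mcd_root_leaf_path t1 Cs ->
    \sum_(C <- Cs) T2_size t1 t2 C <= K * n.
Proof.
exists 16 => n t1 t2 Cs hu hp hn [C0 [rest [-> h0 hc _]]].
have ne : noedge t1 C0.
  by move=> x y [_ yn _ _]; rewrite h0 yn.
have hi : inv1 t1 C0 by move=> x y x' y' e; case: (ne _ _ e).
have hs := chain_sum (leqnn _) hi hc.
have hcard : card t1 C0 <= tsize t1 by apply: count_size.
have ht := tsize_leaves t1.
apply: leq_trans (sum_le2 _ (fun C => T2_bound C hu hp)) _.
rewrite -hn; lia.
Qed.
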